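(* Let $d,N\in\mathbb{N}$ and $k=2$. Every $\mathbf{x}=(\mathbf{x}_1,\dots,\mathbf{x}_N)\in\mathcal{G}_{d,2}^N$ satisfies $$\mathsf{bary}(\mathbf{x})=1\oplus\Big(\frac1N\sum_{i=1}^N\mathbf{x}_i^{(1)}\Big)\oplus\Big(\frac1N\sum_{i=1}^N\mathbf{x}_i^{(2)}-\frac1{2N}\sum_{i=1}^N\mathbf{x}_i^{(1)}\otimes\mathbf{x}_i^{(1)}+\frac1{2N^2}\sum_{i_1=1}^N\sum_{i_2=1}^N\mathbf{x}_{i_1}^{(1)}\otimes\mathbf{x}_{i_2}^{(1)}\Big).$$
   Context: $T_{d,2}=\mathbb{R}\oplus\mathbb{R}^d\oplus\mathbb{R}^{d\times d}$ with elements $\mathbf{z}=\mathbf{z}^{(0)}\oplus\mathbf{z}^{(1)}\oplus\mathbf{z}^{(2)}$ and product given bilinearly by the tensor (outer) product of levels, truncated (products landing in level $>2$ are $0$); $\mathbf{a}\otimes\mathbf{b}$ for vectors is the matrix $(a_ib_j)$. $\mathfrak{g}_{d,2}$ is the smallest Lie subalgebra (commutator bracket) of $T_{d,2}$ containing $e_1,\dots,e_d\in\mathbb{R}^d$; $\exp(\mathbf{z})=\sum_{\ell=0}^2\mathbf{z}^{\otimes\ell}/\ell!$; $\mathcal{G}_{d,2}=\exp(\mathfrak{g}_{d,2})$, a group with $\log=\exp^{-1}$, $\log(\mathbf{s})=\sum_{\ell\ge1}\frac{(-1)^{\ell+1}}{\ell}(\mathbf{s}-1)^{\otimes\ell}$.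 For $\mathbf{x}\in\mathcal{G}_{d,2}^N$, $\mathsf{bary}(\mathbf{x})$ is the unique $\mathbf{m}\in\mathcal{G}_{d,2}$ with $\sum_{i=1}^N\log(\mathbf{m}^{-1}\mathbf{x}_i)=0$. *)

(* Defs.v *)
From HB Require Import structures.
From mathcomp Require Import all_boot all_order all_algebra.
From mathcomp Require Import reals.
Set Implicit Arguments. Unset Strict Implicit. Unset Printing Implicit Defensive.
Import Order.TTheory GRing.Theory Num.Theory.
Local Open Scope ring_scope.

Section Tensor.
Variables (R : realType) (d : nat).

Record T2 := mkT2 { lvl0 : R; lvl1 : 'cV[R]_d; lvl2 : 'M[R]_d }.

Definition tens (a b : 'cV[R]_d) : 'M[R]_d := \matrix_(i, j) (a i 0 * b j 0).

Definition tzero : T2 := mkT2 0 0 0.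
Definition tone : T2 := mkT2 1 0 0.
Definition tadd (a b : T2) : T2 :=
  mkT2 (lvl0 a + lvl0 b) (lvl1 a + lvl1 b) (lvl2 a + lvl2 b).
Definition tscale (c : R) (a : T2) : T2 :=
  mkT2 (c * lvl0 a) (c *: lvl1 a) (c *: lvl2 a).
Definition topp (a : T2) : T2 := tscale (-1) a.
Definition tsub (a b : T2) : T2 := tadd a (topp b).
Definition tmul (a b : T2) : T2 :=
  mkT2 (lvl0 a * lvl0 b)
       (lvl0 a *: lvl1 b + lvl0 b *: lvl1 a)
       (lvl0 a *: lvl2 b + lvl0 b *: lvl2 a + tens (lvl1 a) (lvl1 b)).
Definition tbracket (a b : T2) : T2 := tsub (tmul a b) (tmul b a).

Fixpoint tpow (a : T2) (l : nat) : T2 :=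
  if l is l'.+1 then tmul a (tpow a l') else tone.

Definition tbasis (i : 'I_d) : T2 := mkT2 0 (delta_mx i 0) 0.

(* g_{d,2}: smallest Lie subalgebra (subspace closed under the commutator
   bracket) of T_{d,2} containing e_1, ..., e_d *)
Definition in_lie (z : T2) : Prop :=
  forall S : T2 -> Prop,
    S tzero ->
    (forall a b, S a -> S b -> S (tadd a b)) ->
    (forall c a, S a -> S (tscale c a)) ->
    (forall a b, S a -> S b -> S (tbracket a b)) ->
    (forall i, S (tbasis i)) ->
    S z.

Definition texp (z : T2) : T2 :=
  \big[tadd/tzero]_(l < 3) tscale ((l`!)%:R^-1) (tpow z l).

Definition in_group (s : T2) : Prop := exists z, in_lie z /\ s = texp z.

(* log(s) = sum_{l>=1} (-1)^{l+1}/l (s-1)^{(x) l}; for s with s^(0) = 1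
   (in particular on G_{d,2}) all terms with l >= 3 vanish, so the sum is
   truncated at l = 2. *)
Definition tlog (s : T2) : T2 :=
  \big[tadd/tzero]_(1 <= l < 3)
     tscale ((-1) ^+ l.+1 / l%:R) (tpow (tsub s tone) l).

(* inverse in the truncated tensor algebra (for lvl0 a <> 0):
   a^{-1} = a0^{-1} (1 - u + u^{(x)2}), u = a/a0 - 1 *)
Definition tinv (a : T2) : T2 :=
  let u := tsub (tscale (lvl0 a)^-1 a) tone in
  tscale (lvl0 a)^-1 (tadd (tsub tone u) (tmul u u)).

Definition tsum (N : nat) (F : 'I_N -> T2) : T2 := \big[tadd/tzero]_(i < N) F i.

Definition bary_eq (N : nat) (x : 'I_N -> T2) (m : T2) : Prop :=
  in_group m /\ tsum (fun i => tlog (tmul (tinv m) (x i))) = tzero.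

End Tensor.

(* Main.v *)
Require Import Defs.
From mathcomp Require Import all_boot all_order all_algebra.
From mathcomp Require Import reals ring lra.
Set Implicit Arguments. Unset Strict Implicit. Unset Printing Implicit Defensive.
Import Order.TTheory GRing.Theory Num.Theory.
Local Open Scope ring_scope.

Section L.
Variables (R : realType) (d : nat).
Implicit Types (a b : 'cV[R]_d) (z y m : T2 R d).

Lemma T2_ext (p q : T2 R d) : lvl0 p = lvl0 q -> lvl1 p = lvl1 q -> lvl2 p = lvl2 q -> p = q.
Proof. by case: p; case: q => /= ??????; do 3 move=> ->. Qed.

Lemma tensE a b i j : tens a b i j = a i 0 * b j 0.
Proof. by rewrite mxE. Qed.

Lemma tens_tr a b : (tens a b)^T = tens b a.
Proof. by apply/matrixP=> i j; rewrite !mxE mulrC. Qed.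

Lemma tens_sumr I (r : seq I) (P : pred I) a (F : I -> 'cV[R]_d) :
  \sum_(i <- r | P i) tens a (F i) = tens a (\sum_(i <- r | P i) F i).
Proof.
apply/matrixP=> i j; rewrite !mxE !summxE mulr_sumr; apply: eq_bigr => k _.
by rewrite !mxE.
Qed.

Lemma tens_suml I (r : seq I) (P : pred I) a (F : I -> 'cV[R]_d) :
  \sum_(i <- r | P i) tens (F i) a = tens (\sum_(i <- r | P i) F i) a.
Proof.
apply/matrixP=> i j; rewrite !mxE !summxE mulr_suml; apply: eq_bigr => k _.
by rewrite !mxE.
Qed.

Lemma tensZl c a b : tens (c *: a) b = c *: tens a b.
Proof. by apply/matrixP=> i j; rewrite !mxE mulrA. Qed.
Lemma tensZr c a b : tens a (c *: b) = c *: tens a b.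
Proof. by apply/matrixP=> i j; rewrite !mxE mulrCA. Qed.

Lemma lvl0_sum n (F : 'I_n -> T2 R d) : lvl0 (\big[@tadd R d/@tzero R d]_(i < n) F i) = \sum_(i < n) lvl0 (F i).
Proof. by elim/big_rec2: _ => //= i a b _ ->. Qed.
Lemma lvl1_sum n (F : 'I_n -> T2 R d) : lvl1 (\big[@tadd R d/@tzero R d]_(i < n) F i) = \sum_(i < n) lvl1 (F i).
Proof. by elim/big_rec2: _ => //= i a b _ ->. Qed.
Lemma lvl2_sum n (F : 'I_n -> T2 R d) : lvl2 (\big[@tadd R d/@tzero R d]_(i < n) F i) = \sum_(i < n) lvl2 (F i).
Proof. by elim/big_rec2: _ => //= i a b _ ->. Qed.

Lemma texpE z : lvl0 z = 0 ->
  texp z = mkT2 1 (lvl1 z) (lvl2 z + 2^-1 *: tens (lvl1 z) (lvl1 z)).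
Proof.
move=> h; rewrite /texp !big_ord_recl big_ord0 /=.
apply: T2_ext => /=; rewrite ?h /bump /= ?factS ?fact0 /=;
  try (apply/matrixP => i j; rewrite !mxE); by field.
Qed.

Lemma tinvE m : lvl0 m = 1 ->
  tinv m = mkT2 1 (- lvl1 m) (- lvl2 m + tens (lvl1 m) (lvl1 m)).
Proof.
move=> h; rewrite /tinv; apply: T2_ext => /=; rewrite h invr1;
  try (apply/matrixP => i j; rewrite !mxE); ring.
Qed.

Lemma tlogE y : lvl0 y = 1 ->
  tlog y = mkT2 0 (lvl1 y) (lvl2 y - 2^-1 *: tens (lvl1 y) (lvl1 y)).
Proof.
move=> h; rewrite /tlog big_ltn // big_ltn // big_geq //.
apply: T2_ext => /=; rewrite h;
  try (apply/matrixP => i j; rewrite !mxE); by field.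
Qed.

Lemma logtermE m y : lvl0 m = 1 -> lvl0 y = 1 ->
  tlog (tmul (tinv m) y) = mkT2 0 (lvl1 y - lvl1 m)
    (lvl2 y - lvl2 m + tens (lvl1 m) (lvl1 m) - tens (lvl1 m) (lvl1 y)
     - 2^-1 *: tens (lvl1 y - lvl1 m) (lvl1 y - lvl1 m)).
Proof.
move=> hm hy; rewrite tinvE // tlogE /=; last by rewrite hy mul1r.
apply: T2_ext => //=; apply/matrixP => i j; rewrite !mxE hy; ring.
Qed.

Lemma lie_inv z : in_lie z -> lvl0 z = 0 /\ (lvl2 z)^T = - lvl2 z.
Proof.
move=> H; apply: (H (fun z => lvl0 z = 0 /\ (lvl2 z)^T = - lvl2 z)) => /=.
- by rewrite trmx0 oppr0.
- move=> a b [a0 a2] [b0 b2]; by rewrite a0 b0 addr0 linearD /= a2 b2 opprD.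
- move=> c a [a0 a2]; by rewrite a0 mulr0 linearZ /= a2 scalerN.
- move=> a b [a0 _] [b0 _]; rewrite /= a0 b0; split; first ring.
  apply/matrixP => i j; rewrite !mxE; ring.
- by move=> i; rewrite trmx0 oppr0.
Qed.

Lemma group_inv (s : T2 R d) : in_group s -> lvl0 s = 1 /\ lvl2 s + (lvl2 s)^T = tens (lvl1 s) (lvl1 s).
Proof.
case=> z [/lie_inv [z0 z2] ->]; rewrite texpE //=; split => //.
rewrite linearD /= linearZ /= tens_tr z2; apply/matrixP=> i j; rewrite !mxE; by field.
Qed.

Lemma tens_delta (i j : 'I_d) : tens (delta_mx i 0) (delta_mx j 0) = delta_mx i j :> 'M[R]_d.
Proof.
apply/matrixP=> k l; rewrite !mxE /=.
by case: (k == i); case: (l == j); rewrite /= ?mulr1 ?mulr0 ?mul0r.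
Qed.

Lemma lie_of v (A : 'M[R]_d) : A^T = - A -> in_lie (mkT2 0 v A).
Proof.
move=> hA S h0 hadd hsc hbr hb.
have -> : mkT2 0 v A = tadd (\big[@tadd R d/@tzero R d]_(i < d) tscale (v i 0) (tbasis R i))
  (\big[@tadd R d/@tzero R d]_(i < d) \big[@tadd R d/@tzero R d]_(j < d)
      tscale (2^-1 * A i j) (tbracket (tbasis R i) (tbasis R j))).
  apply: T2_ext => /=.
  - rewrite lvl0_sum big1 => [|i _]; last by rewrite /= mulr0.
    rewrite lvl0_sum big1 ?add0r // => i _; rewrite lvl0_sum big1 // => j _ /=; ring.
  - rewrite lvl1_sum [X in _ + X]lvl1_sum [X in _ + X]big1 ?addr0 => [|i _]; last first.
      rewrite lvl1_sum; apply: big1 => j _ /=; by rewrite !(scale0r, addr0, scaler0).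
    rewrite {1}(matrix_sum_delta v); apply: eq_bigr => i _; rewrite big_ord1 /=.
    by congr (_ *: delta_mx _ _); apply: ord1.
  - rewrite lvl2_sum [X in X + _]big1 ?add0r => [|i _]; last by rewrite /= scaler0.
    have e : forall i j, lvl2 (tscale (2^-1 * A i j) (tbracket (tbasis R i) (tbasis R j)))
       = (2^-1 * A i j) *: delta_mx i j - (2^-1 * A i j) *: delta_mx j i.
      move=> i j /=; rewrite !tens_delta; apply/matrixP=> k l; rewrite !mxE; ring.
    rewrite lvl2_sum.     under eq_bigr => i _ do (rewrite lvl2_sum; under eq_bigr => j _ do rewrite e).
    under eq_bigr => i _ do rewrite sumrB.
    rewrite sumrB.
    have D : \sum_(i < d) \sum_(j < d) (2^-1 * A i j) *: delta_mx i j = 2^-1 *: A.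
      rewrite [in RHS](matrix_sum_delta A) scaler_sumr; apply: eq_bigr => i _.
      rewrite scaler_sumr; apply: eq_bigr => j _; by rewrite scalerA.
    have D' : \sum_(i < d) \sum_(j < d) (2^-1 * A i j) *: delta_mx j i = (2^-1 *: A)^T.
      rewrite -D raddf_sum; apply: eq_bigr => i _.
      rewrite raddf_sum; apply: eq_bigr => j _; apply/matrixP => k l; rewrite !mxE. by rewrite andbC.
    rewrite D D' linearZ /= hA; apply/matrixP=> k l; rewrite !mxE; by field.
apply hadd.
  by apply: (big_ind S h0 hadd) => i _; apply: hsc.
apply: (big_ind S h0 hadd) => i _; apply: (big_ind S h0 hadd) => j _.
by apply/hsc/hbr.
Qed.
Lemma group_of (s : T2 R d) : lvl0 s = 1 -> lvl2 s + (lvl2 s)^T = tens (lvl1 s) (lvl1 s) ->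
  in_group s.
Proof.
move=> h0 h2; exists (mkT2 0 (lvl1 s) (lvl2 s - 2^-1 *: tens (lvl1 s) (lvl1 s))); split.
  apply: lie_of; apply/matrixP => k l.
  have := congr1 (fun M : 'M[R]_d => M k l) h2; rewrite !mxE => e.
  have -> : lvl2 s l k = lvl1 s k 0 * lvl1 s l 0 - lvl2 s k l by rewrite -e; ring.
  by field.
rewrite texpE //; apply: T2_ext => //=.
by apply/matrixP => k l; rewrite !mxE; field.
Qed.

Lemma tsumE N (x : 'I_N -> T2 R d) (m : T2 R d) : lvl0 m = 1 -> (forall i, lvl0 (x i) = 1) ->
  tsum (fun i => tlog (tmul (tinv m) (x i))) =
  mkT2 0 (\sum_i (lvl1 (x i) - lvl1 m))
   (\sum_i (lvl2 (x i) - lvl2 m + tens (lvl1 m) (lvl1 m) - tens (lvl1 m) (lvl1 (x i))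
     - 2^-1 *: tens (lvl1 (x i) - lvl1 m) (lvl1 (x i) - lvl1 m))).
Proof.
move=> hm hx; rewrite /tsum; apply: T2_ext => /=.
- by rewrite lvl0_sum big1 // => i _; rewrite logtermE.
- by rewrite lvl1_sum; apply: eq_bigr => i _; rewrite logtermE.
- by rewrite lvl2_sum; apply: eq_bigr => i _; rewrite logtermE.
Qed.

Lemma L2 N (v : 'I_N -> 'cV[R]_d) (C : 'I_N -> 'M[R]_d) a B :
  \sum_i v i = N%:R *: a ->
  \sum_i (C i - B + tens a a - tens a (v i) - 2^-1 *: tens (v i - a) (v i - a)) =
  \sum_i C i - N%:R *: B + (N%:R / 2) *: tens a a - 2^-1 *: \sum_i tens (v i) (v i).
Proof.
move=> hS.
rewrite (eq_bigr (fun i => C i + (- B + tens a a - 2^-1 *: tens a a)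
   + (- 2^-1) *: tens (v i) (v i) + (- 2^-1) *: tens a (v i) + 2^-1 *: tens (v i) a));
  last by move=> i _; apply/matrixP => k l; rewrite !mxE; field.
rewrite !big_split /= !sumr_const !card_ord -!scaler_sumr tens_sumr tens_suml hS tensZl tensZr -!scaler_nat.

by apply/matrixP => k l; rewrite !mxE; field.
Qed.

Lemma sumB_const N (v : 'I_N -> 'cV[R]_d) a :
  \sum_i (v i - a) = \sum_i v i - N%:R *: a.
Proof. by rewrite sumrB sumr_const card_ord scaler_nat. Qed.

End L.

Theorem theorem4p11 (R : realType) (d N : nat) (HN : (0 < N)%N)
  (x : 'I_N -> T2 R d) (Hx : forall i, in_group (x i)) :
  let m := mkT2 1
     ((N%:R)^-1 *: \sum_(i < N) lvl1 (x i))
     ((N%:R)^-1 *: \sum_(i < N) lvl2 (x i)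
      - ((2 * N)%:R)^-1 *: \sum_(i < N) tens (lvl1 (x i)) (lvl1 (x i))
      + ((2 * N ^ 2)%:R)^-1 *:
          \sum_(i1 < N) \sum_(i2 < N) tens (lvl1 (x i1)) (lvl1 (x i2))) in
  bary_eq x m /\ (forall m', bary_eq x m' -> m' = m).
Proof.
move=> m; rewrite {}/m !natrM.
have hn : (N%:R : R) != 0 by rewrite pnatr_eq0 -lt0n.
have hx0 i : lvl0 (x i) = 1 by case: (group_inv (Hx i)).
have hxs i : lvl2 (x i) + (lvl2 (x i))^T = tens (lvl1 (x i)) (lvl1 (x i)).
  by case: (group_inv (Hx i)).
set S := \sum_(i < N) lvl1 (x i).
set sC := \sum_(i < N) lvl2 (x i).
set Q := \sum_(i < N) tens (lvl1 (x i)) (lvl1 (x i)).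
set SS := \sum_(i1 < N) \sum_(i2 < N) tens (lvl1 (x i1)) (lvl1 (x i2)).
have hSS : tens S S = SS.
  rewrite /S -tens_suml; apply: eq_bigr => i _; by rewrite -tens_sumr.
have hC : sC + sC^T = Q.
  rewrite /sC raddf_sum -big_split; apply: eq_bigr => i _; exact: hxs.
have hQ : Q^T = Q by rewrite /Q raddf_sum; apply: eq_bigr => i _; exact: tens_tr.
have hSSt : SS^T = SS.
  rewrite -hSS tens_tr //.
split.
- split.
  + apply: group_of => //=.
    rewrite tensZl tensZr hSS; apply/matrixP => k l.
    have e1 := congr1 (fun M : 'M[R]_d => M k l) hC.
    have e2 := congr1 (fun M : 'M[R]_d => M k l) hQ.
    have e3 := congr1 (fun M : 'M[R]_d => M k l) hSSt.
    rewrite /= !mxE in e1 e2 e3 *.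
    have -> : sC l k = Q k l - sC k l by rewrite -e1; ring.
    rewrite e2 e3; field.
    by rewrite pnatr_eq0 -lt0n.
  + rewrite tsumE //; apply: T2_ext => //=.
    * by rewrite sumB_const -/S scalerA mulfV // scale1r subrr.
    * rewrite (@L2 R d N (fun i => lvl1 (x i)) (fun i => lvl2 (x i))); last first.
        by rewrite scalerA mulfV // scale1r.
      rewrite -/sC -/Q tensZl tensZr hSS; apply/matrixP => k l; rewrite !mxE; field.
      by rewrite pnatr_eq0 -lt0n.
- move=> m' [hg]; case: (group_inv hg) => h0 _; rewrite tsumE // => hs.
  have e1 := congr1 (@lvl1 R d) hs; have e2 := congr1 (@lvl2 R d) hs.
  rewrite /= sumB_const -/S in e1.
  have ha : lvl1 m' = (N%:R)^-1 *: S.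
    by move/eqP: e1; rewrite subr_eq0 => /eqP ->; rewrite scalerA mulVf // scale1r.
  rewrite /= (@L2 R d N (fun i => lvl1 (x i)) (fun i => lvl2 (x i))) in e2; last first.
    by rewrite ha scalerA mulfV // scale1r.
  rewrite -/sC -/Q ha tensZl tensZr hSS in e2.
  apply: T2_ext => //=.
  apply/matrixP => k l; have := congr1 (fun M : 'M[R]_d => M k l) e2; rewrite !mxE.
  set L := (X in X = 0 -> _) => E.
  apply/eqP; rewrite -subr_eq0; apply/eqP.
  transitivity (- (N%:R)^-1 * L); last by rewrite E mulr0.
  rewrite /L; field.
  by rewrite pnatr_eq0 -lt0n.
Qed.
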